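(* Let $\mathcal{S}_1,\dots,\mathcal{S}_n\subseteq\mathbb{R}^D$ be independent linear subspaces (i.e. $\sum_{\ell=1}^n d_\ell=\dim(\sum_\ell\mathcal{S}_\ell)$, $d_\ell=\dim\mathcal{S}_\ell$), and let $\mathcal{X}=\{\boldsymbol{x}_1,\dots,\boldsymbol{x}_N\}\subseteq\bigcup_\ell\mathcal{S}_\ell$ consist of unit-norm vectors such that each $\mathcal{S}_\ell$ contains at least $d_\ell$ points of $\mathcal{X}$ spanning $\mathcal{S}_\ell$. Let $k\ge\sum_{\ell=1}^n d_\ell$ and let $\mathcal{X}_0^{(k)}$ be the output of the farthest first search procedure: $\mathcal{X}_0^{(1)}=\{\boldsymbol{x}_j\}$ for an arbitrary (e.g. random) $j$, and for $i=1,\dots,k-1$, $\mathcal{X}_0^{(i+1)}=\mathcal{X}_0^{(i)}\cup\{\boldsymbol{x}\}$ where $\boldsymbol{x}\in\arg\max_{\boldsymbol{x}_j\in\mathcal{X}}f_\infty(\boldsymbol{x}_j,\mathcal{X}_0^{(i)})$. Then $\mathcal{X}_0^{(k)}$ contains at least $d_\ell$ linearly independent points from each $\mathcal{S}_\ell$, and with $\mathcal{X}_0=\mathcal{X}_0^{(k)}$ the problem defining $f_\infty(\boldsymbol{x}_j,\mathcal{X}_0^{(k)})$ is feasible for every $\boldsymbol{x}_j\in\mathcal{X}$ and all of its optimal solutions are subspace-preserving.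
   Context: For $\mathcal{X}_0\subseteq\mathcal{X}$ and $\boldsymbol{x}_j\in\mathcal{X}$, $f_\infty(\boldsymbol{x}_j,\mathcal{X}_0):=\min_{\boldsymbol{c}\in\mathbb{R}^N}\|\boldsymbol{c}\|_1$ subject to $\boldsymbol{x}_j=\sum_{i:\boldsymbol{x}_i\in\mathcal{X}_0}c_i\boldsymbol{x}_i$, with $f_\infty(\boldsymbol{x}_j,\mathcal{X}_0):=\infty$ if infeasible. A vector $\boldsymbol{c}\in\mathbb{R}^N$ associated with $\boldsymbol{x}_j$ is subspace-preserving if $c_i\neq0$ implies that $\boldsymbol{x}_i$ and $\boldsymbol{x}_j$ lie in the same subspace $\mathcal{S}_\ell$. *)

(* Defs.v *)
From HB Require Import structures.
From mathcomp Require Import all_boot all_order all_algebra.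
From mathcomp Require Import boolp classical_sets reals constructive_ereal ereal.
Set Implicit Arguments. Unset Strict Implicit. Unset Printing Implicit Defensive.
Import Order.TTheory GRing.Theory Num.Theory.
Local Open Scope ring_scope.
Local Open Scope classical_set_scope.

Section Defs.
Variables (R : realType) (D N : nat).

Definition feasible (x : 'I_N -> 'rV[R]_D) (X0 : {set 'I_N}) (v : 'rV[R]_D)
  (c : 'I_N -> R) : Prop :=
  v = \sum_(i in X0) c i *: x i.

Definition l1norm (c : 'I_N -> R) : R := \sum_i `|c i|.

(* f_infty(v, X0) = min ||c||_1 over feasible c; +oo if infeasible
   (ereal_inf of the empty set is +oo). *)
Definition f_infty (x : 'I_N -> 'rV[R]_D) (X0 : {set 'I_N}) (v : 'rV[R]_D)
  : \bar R :=
  ereal_inf [set (l1norm c)%:E | c in feasible x X0 v].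

Definition optimal (x : 'I_N -> 'rV[R]_D) (X0 : {set 'I_N}) (v : 'rV[R]_D)
  (c : 'I_N -> R) : Prop :=
  feasible x X0 v c /\ forall c', feasible x X0 v c' -> l1norm c <= l1norm c'.

Definition subspace_preserving (n : nat) (S : 'I_n -> {vspace 'rV[R]_D})
  (x : 'I_N -> 'rV[R]_D) (j : 'I_N) (c : 'I_N -> R) : Prop :=
  forall i, c i != 0 -> exists l, (x i \in S l) && (x j \in S l).

Definition unit_norm (v : 'rV[R]_D) : Prop := \sum_i (v 0 i) ^+ 2 = 1.

(* X0^{(i)} in the farthest first search: the indices selected at steps
   0 .. i-1. *)
Definition ffs_set (sel : nat -> 'I_N) (i : nat) : {set 'I_N} :=
  [set sel (nat_of_ord m) | m : 'I_i].

End Defs.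

(* Main.v *)
Require Import Defs.
From HB Require Import structures.
From mathcomp Require Import all_boot all_order all_algebra.
From mathcomp Require Import boolp classical_sets reals constructive_ereal ereal.
Set Implicit Arguments. Unset Strict Implicit.
Import Order.TTheory GRing.Theory Num.Theory.
Local Open Scope ring_scope.

Section Helpers.
Variables (R : realType) (D N : nat) (x : 'I_N -> 'rV[R]_D).

Definition Span (X0 : {set 'I_N}) : {vspace 'rV[R]_D} := (\sum_(i in X0) <[x i]>)%VS.

Lemma Span_seq (A : {set 'I_N}) : (<<[seq x j | j in A]>>)%VS = Span A.
Proof. by rewrite span_def big_map big_enum. Qed.

Lemma Span_feas X0 v : v \in Span X0 <-> exists c, feasible x X0 v c.
Proof.
split.
  move=> /memv_sumP[vs Hvs ->].
  have [c Hc] : exists c : 'I_N -> R, forall i, i \in X0 -> vs i = c i *: x i.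
    have [f Hf] := @choice _ _ (fun i r => i \in X0 -> vs i = r *: x i) (fun i =>
      match boolP (i \in X0) with
      | AltTrue Hi => let: ex_intro r Hr := (vlineP _ _ (Hvs i Hi)) in ex_intro _ r (fun _ => Hr)
      | AltFalse Hi => ex_intro _ 0 (fun H => False_ind _ (negP Hi H))
      end).
    by exists f.
  by exists c; rewrite /feasible; apply: eq_bigr => i /Hc.
move=> [c ->]; apply: memv_sumr => i _; exact: memvZ (memv_line _).
Qed.

Lemma Span_card X0 : (\dim (Span X0) <= #|X0|)%N.
Proof.
apply: leq_trans (dimv_leq_sum _ _ _) _.
rewrite [X in (_ <= X)%N]cardE -sum1_size big_enum /=.
by apply: leq_sum => i _; rewrite dim_vline leq_b1.
Qed.

Lemma Span_extract (B : {set 'I_N}) : exists C : {set 'I_N},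
  [/\ C \subset B, Span C = Span B & #|C| = \dim (Span C)].
Proof.
move Hm: #|B| => m; elim: m B Hm => [|m IH] B0 Hm.
  exists (finset.set0 : {set 'I_N}); move/eqP: Hm; rewrite cards_eq0 => /eqP ->.
  by rewrite finset.sub0set /Span !finset.big_set0 dimv0 finset.cards0.
have [j jB0] : exists j, j \in B0.
  by apply/finset.set0Pn; rewrite -card_gt0 Hm.
have EB : B0 = j |: (B0 :\ j) by rewrite finset.setD1K.
have [C [CB SC cC]] : exists C : {set 'I_N},
  [/\ C \subset B0 :\ j, Span C = Span (B0 :\ j) & #|C| = \dim (Span C)].
  by apply: IH; move: Hm; rewrite (finset.cardsD1 j) jB0 add1n => -[].
have jB : j \notin B0 :\ j by rewrite finset.setD11.
rewrite EB; move: (B0 :\ j) jB CB SC => B jB CB SC.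
case: (boolP (x j \in Span B)) => Hj.
  exists C; split => //; first by apply: fintype.subset_trans CB (finset.subsetUr _ _).
  rewrite SC /Span finset.big_setU1 //= -/(Span B); apply/eqP; rewrite eqEsubv addvSr.
  by rewrite subv_add subvv andbT.
have jC : j \notin C by apply: contra jB => /(fintype.subsetP CB).
exists (j |: C); split.
- by rewrite finset.setUS.
- by rewrite /Span !finset.big_setU1 //= -!/(Span _) SC.
- apply/eqP; rewrite eqn_leq Span_card andbT finset.cardsU1 jC add1n.
  have sub : (Span C <= Span (j |: C))%VS by rewrite /Span finset.big_setU1 //= addvSr.
  rewrite cC ltn_neqAle dimvS // andbT.
  apply/negP => /eqP/esym E.
  have := dimv_leqif_eq sub; rewrite -E => /leqif_refl/eqP Eq.
  apply: (negP Hj); rewrite -SC Eq /Span finset.big_setU1 //=.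
  by rewrite -[X in X \in _]addr0; apply: memv_add; [exact: memv_line | exact: mem0v].
Qed.


Lemma Span_mono (A B : {set 'I_N}) : A \subset B -> (Span A <= Span B)%VS.
Proof.
move=> AB; apply/subv_sumP => i iA; apply: (sumv_sup i); last exact: subvv.
exact: (fintype.subsetP AB).
Qed.

Lemma Span_mem (A : {set 'I_N}) i : i \in A -> x i \in Span A.
Proof. by move=> iA; apply: (sumv_sup i) => //; apply: memv_line. Qed.

Lemma finf_inf X0 v : ~ (exists c, feasible x X0 v c) -> f_infty x X0 v = +oo%E.
Proof.
move=> H; rewrite /f_infty.
have -> : ([set (l1norm c)%:E | c in feasible x X0 v] = set0)%classic.
  apply/seteqP; split; last by move=> ?.
  by move=> y [c Hc _]; exfalso; apply: H; exists c.
exact: ereal_inf0.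
Qed.

Lemma finf_fin X0 v c : feasible x X0 v c -> (f_infty x X0 v <= (l1norm c)%:E)%E.
Proof. by move=> Hc; apply: ereal_inf_lbound; exists c. Qed.

Section Dir.
Variables (n : nat) (S : 'I_n -> {vspace 'rV[R]_D}) (lab : 'I_N -> 'I_n).
Hypothesis Hlab : forall i, x i \in S (lab i).
Hypothesis Hdir : directv (\sum_(l < n) S l).

Lemma decomp (X0 : {set 'I_N}) (c : 'I_N -> R) l0 :
  \sum_(i in X0) c i *: x i \in S l0 ->
  \sum_(i in X0) c i *: x i = \sum_(i in X0 | lab i == l0) c i *: x i.
Proof.
set v := \sum_(i in X0) c i *: x i => Hv.
pose w l := \sum_(i in X0 | lab i == l) c i *: x i.
have Hw : forall l, w l \in S l.
  move=> l; apply: memv_suml => i /andP[_ /eqP <-]; exact: memvZ.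
have Hp : v = \sum_(l < n) w l by rewrite /v (partition_big lab xpredT).
pose us l := w l - (if l == l0 then v else 0).
have Hind := directv_sum_independent Hdir.
have H0 : us l0 = 0.
  apply: (Hind us) => //.
  - by move=> l _; apply: rpredB => //; case: eqP => [->|_]; rewrite ?mem0v.
  - by rewrite sumrB -big_mkcond big_pred1_eq -Hp subrr.
by move: H0; rewrite /us eqxx => /eqP; rewrite subr_eq0 => /eqP E; exact: esym E.
Qed.

End Dir.
End Helpers.

Lemma ffs0 N (sel : nat -> 'I_N) : ffs_set sel 0 = finset.set0.
Proof. by apply/finset.setP => j; rewrite finset.in_set0; apply/imsetP => -[[m]]. Qed.

Lemma ffsS N (sel : nat -> 'I_N) i : ffs_set sel i.+1 = sel i |: ffs_set sel i.
Proof.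
apply/finset.setP => j; rewrite in_setU1; apply/imsetP/orP.
  move=> [m _ ->]; case: (ltnP m i) => h.
    by right; apply/imsetP; exists (Ordinal h).
  left; have -> : nat_of_ord m = i by apply/eqP; rewrite eqn_leq h -ltnS ltn_ord.
  by [].
case=> [/eqP -> | /imsetP[m _ ->]].
  by exists (ord_max : 'I_i.+1).
by exists (widen_ord (leqnSn i) m).
Qed.
Theorem theorem2 (R : realType) (D n N : nat)
  (S : 'I_n -> {vspace 'rV[R]_D}) (x : 'I_N -> 'rV[R]_D)
  (k : nat) (sel : nat -> 'I_N) :
  (* independent subspaces *)
  (\sum_(l < n) \dim (S l))%N = \dim (\sum_(l < n) S l)%VS ->
  (* X is a set of N distinct unit-norm points in the union of the S_l *)
  injective x ->
  (forall j, unit_norm (x j)) ->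
  (forall j, exists l, x j \in S l) ->
  (* each S_l contains (at least d_l) points of X spanning S_l *)
  (forall l, exists A : {set 'I_N},
      (forall j, j \in A -> x j \in S l) /\
      (<<[seq x j | j in A]>>)%VS = S l) ->
  (* k >= sum_l d_l (and k >= 1 so that Y^{(k)} is defined) *)
  (0 < k)%N ->
  (\sum_(l < n) \dim (S l) <= k)%N ->
  (* farthest first search: sel 0 arbitrary, then argmax of f_infty *)
  (forall i, (1 <= i < k)%N -> forall j,
      (f_infty x (ffs_set sel i) (x j) <= f_infty x (ffs_set sel i) (x (sel i)))%E) ->
  (* conclusion 1: d_l linearly independent points from each S_l *)
  (forall l, exists A : {set 'I_N},
      [/\ A \subset ffs_set sel k,
          (forall j, j \in A -> x j \in S l),
          #|A| = \dim (S l) &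
          free [seq x j | j in A]]) /\
  (* conclusion 2: feasibility, and optimal solutions are subspace-preserving *)
  (forall j, (exists c, feasible x (ffs_set sel k) (x j) c) /\
      (forall c, optimal x (ffs_set sel k) (x j) c ->
                 subspace_preserving S x j c)).
Proof.
move=> Hdim xinj Hunit Hcov Hspan k0 Hk Hsel.
have [lab Hlab] := @choice _ _ (fun j l => x j \in S l) Hcov.
have Hdir : directv (\sum_(l < n) S l) by apply/directvP; rewrite /= Hdim.
set V := (\sum_(l < n) S l)%VS.
have xn0 : forall j, x j != 0.
  move=> j; apply/eqP => E; have := Hunit j; rewrite /unit_norm E.
  rewrite big1 => [/eqP|i _]; last by rewrite mxE expr0n.
  by rewrite eq_sym oner_eq0.
have SpV : forall Y, (Span x Y <= V)%VS.
  move=> Y; apply/subv_sumP => i _; apply: (sumv_sup (lab i)) => //; exact: Hlab.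
have VSp : forall Y, (forall j, x j \in Span x Y) -> (V <= Span x Y)%VS.
  move=> Y H; apply/subv_sumP => l _; have [A [_ <-]] := Hspan l.
  by apply/span_subvP => v /mapP[j _ ->].
have inv : forall i, (1 <= i <= k)%N ->
    Span x (ffs_set sel i) = V \/ (i <= \dim (Span x (ffs_set sel i)))%N.
  elim=> [//|i IH] /andP[_ Hik].
  case: (posnP i) => [->|ip].
    right; rewrite ffsS ffs0 finset.setU0 /Span finset.big_set1 dim_vline xn0 //.
  have Hi : (1 <= i < k)%N by rewrite ip.
  have sub : (Span x (ffs_set sel i) <= Span x (ffs_set sel i.+1))%VS.
    by apply: Span_mono; rewrite ffsS finset.subsetUr.
  case: IH => [|E|Hd]; first by rewrite ip ltnW.
    left; apply/eqP; rewrite eqEsubv SpV /= -{1}E sub //.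
  case: (boolP [forall j, x j \in Span x (ffs_set sel i)]) => Hall.
    left; apply/eqP; rewrite eqEsubv SpV /=.
    apply: subv_trans sub; apply: VSp => j; exact: (forallP Hall j).
  right.
  have [j Hj] : exists j, x j \notin Span x (ffs_set sel i).
    by move/forallPn: Hall => [j Hj]; exists j.
  have fj : f_infty x (ffs_set sel i) (x j) = +oo%E.
    by apply: finf_inf => H; move/Span_feas: H => H; rewrite H in Hj.
  have Hs : x (sel i) \notin Span x (ffs_set sel i).
    apply/negP => /Span_feas [c Hc].
    have := Hsel i Hi j; rewrite fj leye_eq => /eqP E.
    by have := finf_fin Hc; rewrite E.
  have ns : sel i \notin ffs_set sel i.
    by apply: contra Hs; apply: Span_mem.
  have lt : (\dim (Span x (ffs_set sel i)) < \dim (Span x (ffs_set sel i.+1)))%N.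
    rewrite (ltn_leqif (dimv_leqif_sup sub)); apply: contra Hs => H.
    apply: (subvP H); apply: Span_mem; rewrite ffsS finset.setU11 //.
  exact: leq_ltn_trans Hd lt.
set X1 := ffs_set sel k.
have SX1 : Span x X1 = V.
  case: (inv k) => [|//|Hd]; first by rewrite k0 leqnn.
  apply/eqP; rewrite eqEdim SpV /=; apply: leq_trans Hd; rewrite -Hdim //.
have inV : forall l v, v \in S l -> v \in Span x X1.
  by move=> l v Hv; rewrite SX1; apply: (sumv_sup l).
split.
  move=> l; pose A := [set i in X1 | lab i == l].
  have SA : Span x A = S l.
    apply/eqP; rewrite eqEsubv; apply/andP; split.
      apply/subv_sumP => i; rewrite inE => /andP[_ /eqP <-]; exact: Hlab.
    apply/subvP => v Hv; have /Span_feas [c Hc] := inV l v Hv.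
    apply/Span_feas; exists c; rewrite /feasible Hc (decomp Hlab Hdir (l0:=l)) -?Hc //.
    by apply: eq_bigl => i; rewrite inE.
  have [C [CA SC cC]] := Span_extract x A.
  exists C; split.
  - by apply: fintype.subset_trans CA _; apply/fintype.subsetP => i; rewrite inE => /andP[].
  - by move=> j /(fintype.subsetP CA); rewrite inE => /andP[_ /eqP <-].
  - by rewrite cC SC SA.
  - by rewrite /free Span_seq size_map -cardE cC SC.
move=> j; split; first by apply/Span_feas; apply: (inV (lab j)).
move=> c [Hc Hopt].
pose c' i := if (i \in X1) && (lab i == lab j) then c i else 0.
have Hc' : feasible x X1 (x j) c'.
  rewrite /feasible {1}Hc (decomp Hlab Hdir (l0:=lab j)) -?Hc //.
  rewrite big_mkcondr /=; apply: eq_bigr => i iX.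
  by rewrite /c' iX /=; case: ifP => _ //; rewrite scale0r.
have le := Hopt _ Hc'.
have Hterm : forall i, 0 <= `|c i| - `|c' i|.
  by move=> i; rewrite subr_ge0 /c'; case: ifP => _ //; rewrite normr0.
have Hsum : \sum_i (`|c i| - `|c' i|) = 0.
  apply/eqP; rewrite eq_le sumr_ge0 ?andbT // sumrB subr_le0 //.
move=> i ci.
have := psumr_eq0P (fun i _ => Hterm i) Hsum (i:=i) isT.
rewrite /c'; case: ifP => [/andP[_ /eqP Ei] _|_]; last first.
  by rewrite normr0 subr0 => /eqP; rewrite normr_eq0 (negPf ci).
by exists (lab j); rewrite -{1}Ei !Hlab.
Qed.
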